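(* Let $f:\mathbb{R}^{n_x}\to\mathbb{R}$ be twice continuously differentiable and let $\epsilon_x:\mathbb{R}^{n_x}\to[0,\infty)$. Consider the modified Newton iteration $$x^+ = x-\big(\nabla_{xx}f(x)+\epsilon_x(x)I\big)^{-1}\nabla_x f(x).$$ Let $x^*$ be an equilibrium point, i.e. $\nabla_x f(x^* )=0$. Assume that $\nabla_{xx}f(x^* )$ is invertible and that $\nabla_{xx}f(\cdot)$ is differentiable on a neighborhood of $x^*$. Assume that $\epsilon_x(\cdot)$ is constant on a neighborhood of $x^*$ and satisfies $\nabla_{xx}f(x^* )+\epsilon_x(x^* )I\succ 0$. Then: (i) if $x^*$ is a local minimum of $\min_{x\in\mathbb{R}^{n_x}} f(x)$, then $x^*$ is a locally asymptotically stable equilibrium of the iteration; (ii) if $x^*$ is not a local minimum of $\min_{x\in\mathbb{R}^{n_x}} f(x)$, then $x^*$ is an unstable equilibrium of the iteration.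
   Context: $\nabla_x f$ denotes the gradient and $\nabla_{xx}f$ the Hessian of $f$. The iteration is regarded as the discrete-time dynamical system $x_{k+1}=\Phi(x_k)$ with $\Phi(x)=x-(\nabla_{xx}f(x)+\epsilon_x(x)I)^{-1}\nabla_xf(x)$ (well defined near $x^*$); local asymptotic stability and instability are in the usual sense for such systems. *)

(* Defs.v *)
From HB Require Import structures.
From mathcomp Require Import all_boot all_order all_algebra.
From mathcomp Require Import all_classical all_reals all_analysis.
Set Implicit Arguments. Unset Strict Implicit. Unset Printing Implicit Defensive.
Import Order.TTheory GRing.Theory Num.Theory.
Import numFieldNormedType.Exports.
Local Open Scope ring_scope.
Local Open Scope classical_set_scope.

Section Defs.
Variables (R : realType) (n : nat).
Notation X := 'cV[R]_n.

Definition basis_vec (i : 'I_n) : X := delta_mx i 0.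

Definition grad (f : X -> R) (x : X) : X :=
  \col_i ('D_(basis_vec i) f x).

Definition hess (f : X -> R) (x : X) : 'M[R]_n :=
  \matrix_(i, j) ('D_(basis_vec j) (fun y => 'D_(basis_vec i) f y) x).

Definition C2 (f : X -> R) : Prop :=
  (forall x, differentiable f x) /\
  (forall x, differentiable (grad f) x) /\
  continuous (hess f).

Definition posdef (M : 'M[R]_n) : Prop :=
  M^T = M /\ forall v : X, v != 0 -> 0 < (v^T *m M *m v) 0 0.

Definition newton_map (f : X -> R) (eps : X -> R) (x : X) : X :=
  x - invmx (hess f x + eps x *: 1%:M) *m grad f x.

Definition local_min (f : X -> R) (xs : X) : Prop :=
  \forall x \near xs, f xs <= f x.

Definition lyap_stable (Phi : X -> X) (xs : X) : Prop :=
  forall e : R, 0 < e -> exists2 d : R, 0 < d &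
    forall x0 : X, `|x0 - xs| < d -> forall k : nat, `|iter k Phi x0 - xs| < e.

Definition loc_attractive (Phi : X -> X) (xs : X) : Prop :=
  exists2 d : R, 0 < d &
    forall x0 : X, `|x0 - xs| < d -> (fun k => iter k Phi x0) @ \oo --> xs.

Definition loc_asym_stable (Phi : X -> X) (xs : X) : Prop :=
  lyap_stable Phi xs /\ loc_attractive Phi xs.

Definition unstable (Phi : X -> X) (xs : X) : Prop := ~ lyap_stable Phi xs.

End Defs.

(* Main.v *)
Require Import Defs.
From HB Require Import structures.
From mathcomp Require Import all_boot all_order all_algebra.
From mathcomp Require Import all_classical all_reals all_analysis.
From mathcomp Require Import ring lra.
Import Order.TTheory GRing.Theory Num.Theory.
Import numFieldNormedType.Exports.
Local Open Scope ring_scope.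
Local Open Scope classical_set_scope.
Set Implicit Arguments. Unset Strict Implicit. Unset Printing Implicit Defensive.



Section Basic.
Variables (R : realType) (n : nat).
Notation X := 'cV[R]_n.
Notation MM := 'M[R]_n.

Lemma entry_le m p (A : 'M[R]_(m, p)) i j : `|A i j| <= `|A|.
Proof.
rewrite [leRHS]/Num.Def.normr/= mx_normrE.
apply: le_trans; last exact: (le_bigmax _ _ (i, j)).
by [].
Qed.

Lemma norm_le_entries m p (A : 'M[R]_(m, p)) c :
  0 <= c -> (forall i j, `|A i j| <= c) -> `|A| <= c.
Proof.
move=> c0 H; rewrite [leLHS]/Num.Def.normr/= mx_normrE.
by apply: bigmax_le => // -[i j] _; apply: H.
Qed.

Definition dot (a b : X) : R := (a^T *m b) 0 0.

Lemma dotE a b : dot a b = \sum_i a i 0 * b i 0.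
Proof. by rewrite /dot mxE; apply: eq_bigr => i _; rewrite mxE. Qed.

Lemma dotC a b : dot a b = dot b a.
Proof. by rewrite !dotE; apply: eq_bigr => i _; rewrite mulrC. Qed.

Lemma dotDr a b c : dot a (b + c) = dot a b + dot a c.
Proof. by rewrite !dotE -big_split; apply: eq_bigr => i _; rewrite mxE mulrDr. Qed.

Lemma dotDl a b c : dot (b + c) a = dot b a + dot c a.
Proof. by rewrite dotC dotDr !(dotC a). Qed.

Lemma dotNr a b : dot a (- b) = - dot a b.
Proof. by rewrite !dotE -sumrN; apply: eq_bigr => i _; rewrite mxE mulrN. Qed.

Lemma dotNl a b : dot (- a) b = - dot a b.
Proof. by rewrite dotC dotNr dotC. Qed.

Lemma dotBr a b c : dot a (b - c) = dot a b - dot a c.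
Proof. by rewrite dotDr dotNr. Qed.

Lemma dotBl a b c : dot (b - c) a = dot b a - dot c a.
Proof. by rewrite dotDl dotNl. Qed.

Lemma dotZr a k b : dot a (k *: b) = k * dot a b.
Proof. by rewrite !dotE mulr_sumr; apply: eq_bigr => i _; rewrite mxE mulrCA. Qed.

Lemma dotZl a k b : dot (k *: b) a = k * dot b a.
Proof. by rewrite dotC dotZr dotC. Qed.

Lemma dot_tr a (B : MM) b : dot a (B *m b) = dot (B^T *m a) b.
Proof. by rewrite /dot trmx_mul trmxK mulmxA. Qed.

Lemma dot0r a : dot a 0 = 0.
Proof. by rewrite /dot mulmx0 mxE. Qed.

Lemma dot_sym a (B : MM) b : B^T = B -> dot a (B *m b) = dot (B *m a) b.
Proof. by move=> sB; rewrite dot_tr sB. Qed.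

Lemma sum_le_n (F : 'I_n -> R) c : (forall i, `|F i| <= c) -> `|\sum_i F i| <= n%:R * c.
Proof.
move=> H; apply: le_trans (ler_norm_sum _ _ _) _.
apply: le_trans (ler_sum _ (fun i _ => H i)) _.
by rewrite sumr_const card_ord mulr_natl.
Qed.

Lemma dot_le a b : `|dot a b| <= n%:R * (`|a| * `|b|).
Proof.
rewrite dotE; apply: sum_le_n => i; rewrite normrM.
by apply: ler_pM => //; apply: entry_le.
Qed.

Lemma mul_le (B : MM) (a : X) : `|B *m a| <= n%:R * (`|B| * `|a|).
Proof.
apply: norm_le_entries => [|i j].
  by rewrite mulr_ge0 // mulr_ge0.
rewrite mxE; apply: sum_le_n => k; rewrite normrM.
by apply: ler_pM => //; apply: entry_le.
Qed.

Lemma dot_self_ge0 a : 0 <= dot a a.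
Proof. by rewrite dotE sumr_ge0 // => i _; rewrite -expr2 sqr_ge0. Qed.

Lemma E_ge a : `|a| ^+ 2 <= dot a a.
Proof.
have H : `|a| <= Num.sqrt (dot a a).
  apply: norm_le_entries => [|i j]; first exact: sqrtr_ge0.
  rewrite ord1 -ler_sqr ?nnegrE ?sqrtr_ge0 // sqr_sqrtr ?dot_self_ge0 //.
  rewrite dotE (bigD1 i) //= real_normK ?num_real // -expr2 lerDl.
  by apply: sumr_ge0 => k _; rewrite -expr2 sqr_ge0.
have := H; rewrite -(ler_sqr (normr_ge0 _)) ?nnegrE ?sqrtr_ge0 //.
by rewrite sqr_sqrtr ?dot_self_ge0.
Qed.

Lemma E_le a : dot a a <= n%:R * `|a| ^+ 2.
Proof. by rewrite expr2; apply: le_trans (ler_norm _) (dot_le _ _). Qed.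

Lemma dot_2le a b : 2%:R * dot a b <= dot a a + dot b b.
Proof.
have := dot_self_ge0 (a - b).
rewrite dotBl !dotBr (dotC b a); lra.
Qed.

End Basic.



Section Quad.
Variables (R : realType) (n : nat).
Notation X := 'cV[R]_n.
Notation MM := 'M[R]_n.

Definition q (B : MM) (a : X) := dot a (B *m a).

Lemma qE (B : MM) a : (a^T *m B *m a) 0 0 = q B a.
Proof. by rewrite /q /dot mulmxA. Qed.

Lemma q_pos_unit (A : MM) : (forall w, w != 0 -> 0 < q A w) -> A \in unitmx.
Proof.
move=> H; rewrite unitmxE unitfE; apply/negP => /det0P [v v0 vA].
have w0 : v^T != 0 by apply: contra v0 => /eqP h; apply/eqP; rewrite -(trmxK v) h trmx0.
have := H _ w0; rewrite /q dot_tr -trmx_mul vA trmx0 dotC dot0r ltxx //.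
Qed.

Lemma posdef_unit (A : MM) : posdef A -> A \in unitmx.
Proof. by move=> [_ H]; apply: q_pos_unit => w w0; rewrite -qE; apply: H. Qed.

Lemma q_sub (B : MM) a t b : B^T = B ->
  q B (a - t *: b) = q B a - 2%:R * t * dot a (B *m b) + t ^+ 2 * q B b.
Proof.
move=> sB; rewrite /q mulmxBr -scalemxAr dotBl !dotBr !dotZl !dotZr.
rewrite (dotC b (B *m a)) -(dot_sym _ _ sB) -/(q B b).
ring.
Qed.

Lemma CS (B : MM) : B^T = B -> (forall u, 0 <= q B u) ->
  forall a b, dot a (B *m b) ^+ 2 <= q B a * q B b.
Proof.
move=> sB psd a b.
set al := q B a; set be := q B b; set ga := dot a (B *m b).
have Ht t : 0 <= al - 2%:R * t * ga + t ^+ 2 * be by rewrite -q_sub.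
have al0 : 0 <= al := psd a; have be0 : 0 <= be := psd b.
have [bp|] := ltrP 0 be.
  have := Ht (ga / be).
  rewrite -mulrA expr_div_n.
  have -> : ga ^+ 2 / be ^+ 2 * be = ga ^+ 2 / be by field; rewrite gt_eqF.
  have -> : 2%:R * (ga / be * ga) = 2%:R * (ga ^+ 2 / be) by rewrite mulrAC expr2.
  move=> h; have : ga ^+ 2 / be <= al by lra.
  by rewrite ler_pdivrMr // mulrC.
move=> ble; have b0 : be = 0 by apply/eqP; rewrite eq_le ble be0.
have [g0|gn0] := eqVneq ga 0.
  by rewrite g0 expr0n /= mulr_ge0.
have := Ht ((al + 1) / (2%:R * ga)); rewrite b0 mulr0 addr0.
have -> : 2%:R * ((al + 1) / (2%:R * ga)) * ga = al + 1.
  by field.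
lra.
Qed.

Lemma margin (B : MM) : B^T = B -> (forall u, 0 <= q B u) -> B \in unitmx ->
  exists2 d : R, 0 < d & forall w, d * `|w| ^+ 2 <= q B w.
Proof.
move=> sB psd uB.
set ka := n%:R * `|invmx B| + 1.
set K := n%:R * (n%:R * `|B|) + 1.
have ka0 : 0 < ka by rewrite /ka ltr_wpDl // mulr_ge0.
have K0 : 0 < K by rewrite /K ltr_wpDl // !mulr_ge0.
exists (ka ^+ 2 * K)^-1; first by rewrite invr_gt0 mulr_gt0 // exprn_gt0.
move=> w; set u := B *m w.
have wu : `|w| <= ka * `|u|.
  have -> : w = invmx B *m u by rewrite /u mulKmx.
  apply: le_trans (mul_le _ _) _; rewrite mulrA /ka mulrDl mul1r lerDl //.
have uq : `|u| ^+ 2 <= K * q B w.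
  have h1 : dot w (B *m u) = dot u u by rewrite (dot_sym _ _ sB).
  have h2 := CS sB psd w u; rewrite h1 in h2.
  have h3 : q B u <= n%:R * (n%:R * `|B|) * `|u| ^+ 2.
    apply: le_trans (ler_norm _) _; apply: le_trans (dot_le _ _) _.
    have -> : n%:R * (n%:R * `|B|) * `|u| ^+ 2 = n%:R * (`|u| * (n%:R * (`|B| * `|u|))) by ring.
    by apply: ler_wpM2l => //; apply: ler_wpM2l => //; apply: mul_le.
  have h4 := E_ge u.
  have q0 := psd w; have qu0 := psd u.
  have [u0|upos] := eqVneq `|u| 0.
    by rewrite u0 expr0n /= mulr_ge0 // ltW.
  have up : 0 < `|u| ^+ 2 by rewrite exprn_gt0 // lt_def upos normr_ge0.
  have h5 : (`|u| ^+ 2) ^+ 2 <= q B w * (n%:R * (n%:R * `|B|) * `|u| ^+ 2).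
    apply: (@le_trans _ _ (dot u u ^+ 2)).
      by rewrite [X in X <= _]expr2 [X in _ <= X]expr2; apply: ler_pM; rewrite ?sqr_ge0.
    apply: le_trans h2 _; apply: ler_wpM2l => //.
  have h6 : `|u| ^+ 2 <= q B w * (n%:R * (n%:R * `|B|)).
    by rewrite -(ler_pM2r up) -expr2 -mulrA.
  apply: le_trans h6 _; rewrite mulrC; apply: ler_wpM2r => //.
  by rewrite /K lerDl.
rewrite ler_pdivrMl ?mulr_gt0 ?exprn_gt0 //.
apply: (@le_trans _ _ ((ka * `|u|) ^+ 2)).
  by rewrite [X in X <= _]expr2 [X in _ <= X]expr2; apply: ler_pM.
rewrite exprMn -[ka ^+ 2 * K * _]mulrA; apply: ler_pM; rewrite ?sqr_ge0 //.
Qed.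

End Quad.



Lemma near_rad (R : realType) (V : normedModType R) (P : V -> Prop) (p : V) :
  (\forall x \near p, P x) -> exists2 r : R, 0 < r & forall x, `|x - p| < r -> P x.
Proof.
move/nbhs_normP => [r r0 H]; exists r => // x Hx; apply: H.
by rewrite /ball_ /= distrC.
Qed.

Lemma rad_near (R : realType) (V : normedModType R) (P : V -> Prop) (p : V) (r : R) :
  0 < r -> (forall x, `|x - p| < r -> P x) -> \forall x \near p, P x.
Proof.
move=> r0 H; apply/nbhs_normP; exists r => // x Hx; apply: H.
by move: Hx; rewrite /ball_ /= distrC.
Qed.

Section Calc.
Variables (R : realType) (n : nat).
Notation X := 'cV[R]_n.
Notation MM := 'M[R]_n.

Lemma col_decomp (y : X) : y = \sum_j y j 0 *: basis_vec R j.
Proof.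
apply/matrixP => i k; rewrite summxE (bigD1 i) //= big1 => [|j ji].
  by rewrite !mxE ord1 !eqxx mulr1 addr0.
by rewrite !mxE eq_sym (negbTE ji) mulr0.
Qed.

Lemma diff_sum (W : normedModType R) (F : X -> W) p y : differentiable F p ->
  'd F p y = \sum_j y j 0 *: 'D_(basis_vec R j) F p.
Proof.
move=> dF; rewrite {1}(col_decomp y) linear_sum; apply: eq_bigr => j _.
by rewrite linearZ /= deriveE.
Qed.

Lemma grad_dir (f : X -> R) p d : differentiable f p ->
  'D_d f p = dot (grad f p) d.
Proof.
move=> df; rewrite deriveE // diff_sum // dotE; apply: eq_bigr => j _.
by rewrite mxE mulrC.
Qed.

Lemma dgrad (f : X -> R) p y : differentiable (grad f) p ->
  'd (grad f) p y = hess f p *m y.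
Proof.
move=> dg; rewrite diff_sum //; apply/matrixP => i k.
rewrite summxE [RHS]mxE ord1; apply: eq_bigr => j _.
rewrite [LHS]mxE [hess f p i j]mxE.
rewrite (derive_mx (M := grad f)); last exact: diff_derivable.
rewrite [X in _ * X = _]mxE mulrC; congr (_ * _).
have -> : (fun t => grad f t i 0) = (fun t => 'D_(basis_vec R i) f t).
  by apply/funext => t; rewrite mxE.
by [].
Qed.

Lemma grad_exp (f : X -> R) p (eta : R) : differentiable (grad f) p -> 0 < eta ->
  exists2 r : R, 0 < r & forall x, `|x - p| < r ->
    `|grad f x - grad f p - hess f p *m (x - p)| <= eta * `|x - p|.
Proof.
move=> dg e0; have := diff_locally dg; move/eqaddoP => H.
have [r r0 Hr] := near_rad (H eta e0).
exists r => // x xp; have := Hr (x - p); rewrite subr0 => /(_ xp) /=.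
apply: le_trans; rewrite le_eqVlt; apply/orP; left; apply/eqP; congr (`|_|).
rewrite !fctE /= subrK dgrad // opprD addrA.
by [].
Qed.

Lemma cont_rad (V W : normedModType R) (g : V -> W) p (eta : R) : {for p, continuous g} -> 0 < eta ->
  exists2 r : R, 0 < r & forall x, `|x - p| < r -> `|g x - g p| < eta.
Proof.
move=> cg e0; have H : \forall x \near p, `|g x - g p| < eta.
  by apply: cvgr_distC_lt.
exact: near_rad H.
Qed.

Lemma ray (f : X -> R) p d s : differentiable f (p + s *: d) ->
  is_derive s 1 (fun t => f (p + t *: d)) (dot (grad f (p + s *: d)) d).
Proof.
move=> df.
have E : (fun h : R => h^-1 *: (((fun t => f (p + t *: d)) \o shift s) (h *: 1) - f (p + s *: d)))
  = (fun h => h^-1 *: ((f \o shift (p + s *: d)) (h *: d) - f (p + s *: d))).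
  apply/funext => h /=; congr (_ *: (f _ - _)).
  by rewrite [h *: 1]mulr1 scalerDl addrCA.
have der : derivable f (p + s *: d) d by apply: diff_derivable.
split; first by rewrite /derivable E.
by rewrite /derive E -/(derive f (p + s *: d) d) grad_dir.
Qed.

End Calc.



Section Second.
Variables (R : realType) (n : nat).
Notation X := 'cV[R]_n.
Notation MM := 'M[R]_n.

Lemma ray_cont (f : X -> R) p d : (forall x, differentiable f x) ->
  continuous (fun t : R => f (p + t *: d)).
Proof.
move=> df t; have h := ray (df (p + t *: d)).
have := @ex_derive _ _ _ _ _ _ _ h.
by move/derivable1_diffP/differentiable_continuous.
Qed.

Lemma grad_line (f : X -> R) p (v : X) a (err : X) :
  grad f p = 0 ->
  err = grad f (p + a *: v) - grad f p - hess f p *m (p + a *: v - p) ->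
  dot (grad f (p + a *: v)) v = dot err v + a * q (hess f p) v.
Proof.
move=> g0 ->; rewrite g0 subr0 (addrC p) addrK -scalemxAr dotBl dotZl.
by rewrite /q (dotC (hess f p *m v)) subrK.
Qed.

Lemma localmin_psd (f : X -> R) p : C2 f -> grad f p = 0 -> local_min f p ->
  forall v, 0 <= q (hess f p) v.
Proof.
move=> [df [dg _]] g0 lm v; rewrite leNgt; apply/negP => qneg.
set H := hess f p; set c := - q H v.
have c0 : 0 < c by rewrite /c oppr_gt0.
set N := n%:R * `|v| ^+ 2 + 1.
have N0 : 0 < N by rewrite /N ltr_wpDl // mulr_ge0 // sqr_ge0.
set eta := c / (2%:R * N).
have eta0 : 0 < eta by rewrite /eta divr_gt0 // mulr_gt0.
have etaN : eta * N = c / 2%:R by rewrite /eta; field; rewrite gt_eqF.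
have [rg rg0 Hg] := grad_exp (dg p) eta0.
have [rm rm0 Hm] := near_rad lm.
set r := Num.min rg rm.
have r0 : 0 < r by rewrite lt_min rg0 rm0.
set s1 := r / (`|v| + 1).
have v1 : 0 < `|v| + 1 by rewrite ltr_wpDl.
have s10 : 0 < s1 by rewrite divr_gt0.
have s1v : s1 * `|v| < r.
  rewrite /s1 mulrAC ltr_pdivrMr // mulrDr mulr1 ltrDl //.
set g := fun t : R => f (p + t *: v).
have [xi xiI E] : exists2 x, x \in `]0, s1[%R &
    g s1 - g 0 = dot (grad f (p + x *: v)) v * (s1 - 0).
  apply: (@MVT R g (fun t => dot (grad f (p + t *: v)) v)) => //; first by move=> x _; exact: ray (df _).
  by apply: continuous_subspaceT; exact: ray_cont.
move: xiI; rewrite in_itv /= => /andP [xi0 xis].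
have xir : `|p + xi *: v - p| < rg.
  rewrite (addrC p) addrK normrZ gtr0_norm //.
  apply: (@le_lt_trans _ _ (s1 * `|v|)); first by rewrite ler_wpM2r // ltW.
  by apply: lt_le_trans s1v _; rewrite ge_min lexx.
have errb := Hg _ xir.
set err := grad f (p + xi *: v) - grad f p - hess f p *m (p + xi *: v - p).
have gl : dot (grad f (p + xi *: v)) v = dot err v + xi * q H v by exact: grad_line.
have de := dot_le err v.
have en : `|err| <= eta * (xi * `|v|).
  have e1 : p + xi *: v - p = xi *: v by rewrite addrC addKr.
  by move: errb; rewrite -/err e1 normrZ gtr0_norm.
have neg : dot (grad f (p + xi *: v)) v < 0.
  rewrite gl -/H.
  have h1 : dot err v <= n%:R * ((eta * (xi * `|v|)) * `|v|).
    apply: le_trans (ler_norm _) _; apply: le_trans de _.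
    by apply: ler_wpM2l => //; apply: ler_wpM2r.
  have h2 : n%:R * ((eta * (xi * `|v|)) * `|v|) = xi * (eta * (n%:R * `|v| ^+ 2)) by ring.
  have h3 : eta * (n%:R * `|v| ^+ 2) <= c / 2%:R.
    by rewrite -etaN /N; apply: ler_wpM2l; [exact: ltW | rewrite lerDl].
  have h4 : xi * (eta * (n%:R * `|v| ^+ 2)) <= xi * (c / 2%:R) by apply: ler_wpM2l => //; exact: ltW.
  have hc : q H v = - c by rewrite /c opprK.
  have h5 : 0 < xi * c by rewrite mulr_gt0.
  rewrite hc mulrN; lra.
have : f p <= f (p + s1 *: v).
  apply: Hm; rewrite (addrC p) addrK normrZ gtr0_norm //.
  by apply: lt_le_trans s1v _; rewrite ge_min lexx orbT.
move: E; rewrite /g scale0r addr0 subr0 => E fle.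
have : dot (grad f (p + xi *: v)) v * s1 < 0 by rewrite pmulr_llt0.
rewrite -E; lra.
Qed.

Lemma margin_localmin (f : X -> R) p : C2 f -> grad f p = 0 ->
  (exists2 dl : R, 0 < dl & forall w, dl * `|w| ^+ 2 <= q (hess f p) w) ->
  local_min f p.
Proof.
move=> [df [dg _]] g0 [dl dl0 Hdl].
set H := hess f p.
set eta := dl / (n%:R + 1).
have n1 : 0 < n%:R + 1 :> R by rewrite ltr_wpDl.
have eta0 : 0 < eta by rewrite divr_gt0.
have etan : eta * n%:R <= dl.
  rewrite /eta mulrAC ler_pdivrMr //; apply: ler_wpM2l; [exact: ltW | by rewrite lerDl].
have [rg rg0 Hg] := grad_exp (dg p) eta0.
apply: (rad_near rg0) => x xp.
set d := x - p.
set g := fun t : R => f (p + t *: d).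
have : g 0 <= g 1.
  apply: (@ger0_derive1_ndecr R g 0 1) => //.
  - move=> t _; exact: (@ex_derive _ _ _ _ _ _ _ (ray (df (p + t *: d)))).
  - move=> t; rewrite in_itv /= => /andP [t0 t1].
    rewrite derive1E (@derive_val _ _ _ _ _ _ _ (ray (df (p + t *: d)))).
    have e1 : p + t *: d - p = t *: d by rewrite addrC addKr.
    have xir : `|p + t *: d - p| < rg.
      rewrite e1 normrZ gtr0_norm //; apply: le_lt_trans xp.
      by rewrite /d -[leRHS]mul1r ler_wpM2r // ltW.
    have errb := Hg _ xir.
    set err := grad f (p + t *: d) - grad f p - hess f p *m (p + t *: d - p).
    have gl : dot (grad f (p + t *: d)) d = dot err d + t * q H d by exact: grad_line.
    have en : `|err| <= eta * (t * `|d|).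
      by move: errb; rewrite -/err e1 normrZ gtr0_norm.
    have de := dot_le err d.
    rewrite gl.
    have h1 : - dot err d <= n%:R * ((eta * (t * `|d|)) * `|d|).
      rewrite -normrN in de; apply: le_trans (ler_norm _) _.
      rewrite -dotNl; apply: le_trans (dot_le _ _) _; rewrite normrN.
      by apply: ler_wpM2l => //; apply: ler_wpM2r.
    have h2 : n%:R * ((eta * (t * `|d|)) * `|d|) = t * ((eta * n%:R) * `|d| ^+ 2) by ring.
    have h3 : t * ((eta * n%:R) * `|d| ^+ 2) <= t * (dl * `|d| ^+ 2).
      by apply: ler_wpM2l; [exact: ltW | apply: ler_wpM2r; rewrite ?sqr_ge0].
    have h4 : t * (dl * `|d| ^+ 2) <= t * q H d.
      by apply: ler_wpM2l; [exact: ltW | exact: Hdl].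
    lra.
  - by apply: continuous_subspaceT; exact: ray_cont.
by rewrite /g scale0r addr0 scale1r /d addrC subrK.
Qed.

End Second.



Section Step.
Variables (R : realType) (n : nat).
Notation X := 'cV[R]_n.
Notation MM := 'M[R]_n.

Lemma vec_fact (Mz ez a b c gg : X) : Mz + ez = a + b + c - gg ->
  Mz - c = - (gg - 0 - a) + b - ez.
Proof.
move=> /matrixP H; apply/matrixP => i j; have := H i j; rewrite !mxE; lra.
Qed.

Lemma q_bound (B : MM) w : `|q B w| <= n%:R * (n%:R * `|B|) * `|w| ^+ 2.
Proof.
apply: le_trans (dot_le _ _) _.
have -> : n%:R * (n%:R * `|B|) * `|w| ^+ 2 = n%:R * (`|w| * (n%:R * (`|B| * `|w|))) by ring.
by apply: ler_wpM2l => //; apply: ler_wpM2l => //; apply: mul_le.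
Qed.

Lemma qD (A B : MM) w : q (A + B) w = q A w + q B w.
Proof. by rewrite /q mulmxDl dotDr. Qed.

Lemma step_eq (f : X -> R) (eps : X -> R) xs : C2 f -> grad f xs = 0 ->
  (\forall x \near xs, eps x = eps xs) ->
  (exists2 dM : R, 0 < dM & forall w, dM * `|w| ^+ 2 <= q (hess f xs + eps xs *: 1%:M) w) ->
  forall eta1 : R, 0 < eta1 -> exists2 r : R, 0 < r & forall x, `|x - xs| < r ->
   `|(hess f xs + eps xs *: 1%:M) *m (newton_map f eps x - xs) - eps xs *: (x - xs)|
     <= eta1 * (2%:R * `|x - xs| + `|newton_map f eps x - xs|).
Proof.
move=> [df [dg ch]] g0 epsc [dM dM0 HdM] eta1 e10.
set H := hess f xs; set e := eps xs.
set nn := n%:R * n%:R + 1 : R.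
have nn0 : 0 < nn by rewrite /nn ltr_wpDl // mulr_ge0.
set eh := Num.min eta1 dM / nn.
have eh0 : 0 < eh by rewrite divr_gt0 // lt_min e10 dM0.
have [re re0 Hre] := near_rad epsc.
have [rg rg0 Hg] := grad_exp (dg xs) e10.
have [rh rh0 Hrh] := cont_rad (ch xs) eh0.
set r := Num.min re (Num.min rg rh).
have r0 : 0 < r by rewrite !lt_min re0 rg0 rh0.
exists r => // x xr.
have xre : `|x - xs| < re by apply: lt_le_trans xr _; rewrite ge_min lexx.
have xrg : `|x - xs| < rg by apply: lt_le_trans xr _; rewrite !ge_min lexx orbT.
have xrh : `|x - xs| < rh by apply: lt_le_trans xr _; rewrite !ge_min lexx !orbT.
have ex := Hre _ xre.
set E := hess f x - H.
have hE : `|E| < eh := Hrh _ xrh.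
have hnn : n%:R * n%:R + 1 = nn by [].
have nle : n%:R <= nn by rewrite /nn; have := sqr_ge0 (n%:R - 1 : R); have : 0 <= n%:R :> R by []; nra.
have ehnn : eh * nn = Num.min eta1 dM by rewrite /eh divfK // gt_eqF.
have nE1 : n%:R * `|E| <= eta1.
  apply: (@le_trans _ _ (nn * eh)).
    by apply: ler_pM => //; [exact: ltW].
  by rewrite mulrC ehnn ge_min lexx.
have nE2 : n%:R * (n%:R * `|E|) < dM.
  apply: (@le_lt_trans _ _ (n%:R * n%:R * eh)).
    by rewrite mulrA; apply: ler_wpM2l; [rewrite mulr_ge0 | exact: ltW].
  apply: (@lt_le_trans _ _ (nn * eh)).
    by rewrite ltr_pM2r // /nn ltrDl.
  by rewrite mulrC ehnn ge_min lexx orbT.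
set Mx := hess f x + eps x *: 1%:M.
have MxE : Mx = (H + e *: 1%:M) + E by rewrite /Mx ex /E [RHS]addrC -addrA addKr.
have uMx : Mx \in unitmx.
  apply: q_pos_unit => w w0; rewrite MxE qD.
  have w0' : 0 < `|w| ^+ 2 by rewrite exprn_gt0 // normr_gt0.
  have h1 := HdM w.
  have h2 := q_bound E w.
  have h3 : n%:R * (n%:R * `|E|) * `|w| ^+ 2 < dM * `|w| ^+ 2 by rewrite ltr_pM2r.
  have h5 : - q E w <= `|q E w| by rewrite -normrN ler_norm.
  lra.
set z := newton_map f eps x - xs.
set d := x - xs.
set g := grad f x.
have Mxz : Mx *m z = Mx *m d - g.
  by rewrite /z /newton_map -/Mx addrAC mulmxBr mulKVmx.
have key := @vec_fact ((H + e *: 1%:M) *m z) (E *m z) (H *m d) (E *m d) (e *: d) g.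
rewrite key; last first.
  rewrite -mulmxDl -MxE Mxz MxE !mulmxDl -scalemxAl mul1mx.
  by rewrite (addrAC (H *m d)).
have gb := Hg _ xrg; rewrite g0 -/g -/d in gb.
apply: le_trans (ler_normD _ _) _; rewrite normrN.
apply: le_trans (lerD (ler_normD _ _) (lexx _)) _; rewrite normrN.
have b1 : `|E *m d| <= eta1 * `|d|.
  apply: le_trans (mul_le _ _) _; rewrite mulrA.
  by apply: ler_wpM2r.
have b2 : `|E *m z| <= eta1 * `|z|.
  apply: le_trans (mul_le _ _) _; rewrite mulrA.
  by apply: ler_wpM2r.
lra.
Qed.

End Step.



Section Contr.
Variables (R : realType) (n : nat).
Notation X := 'cV[R]_n.
Notation MM := 'M[R]_n.

Lemma q_scal (e : R) (z : X) : q (e *: 1%:M) z = e * dot z z.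
Proof. by rewrite /q -scalemxAl mul1mx dotZr. Qed.

Lemma posdef_margin (M : MM) : posdef M ->
  exists2 dM : R, 0 < dM & forall w, dM * `|w| ^+ 2 <= q M w.
Proof.
move=> pM; have uM := posdef_unit pM; case: pM => sM pos.
apply: margin => // u; have [->|u0] := eqVneq u 0; first by rewrite /q mulmx0 dot0r.
by apply: ltW; rewrite -qE; apply: pos.
Qed.

Lemma contraction (f : X -> R) (eps : X -> R) xs : C2 f -> grad f xs = 0 ->
  (\forall x \near xs, eps x = eps xs) -> 0 <= eps xs ->
  posdef (hess f xs + eps xs *: 1%:M) ->
  (exists2 dl : R, 0 < dl & forall w, dl * `|w| ^+ 2 <= q (hess f xs) w) ->
  exists2 r : R, 0 < r & exists2 c : R, 0 <= c < 1 & forall x, `|x - xs| < r ->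
    dot (newton_map f eps x - xs) (newton_map f eps x - xs) <= c * dot (x - xs) (x - xs).
Proof.
move=> C2f g0 epsc e0 pM [dl dl0 Hdl].
set e := eps xs; set H := hess f xs.
have n1 : 0 < n%:R + 1 :> R by rewrite ltr_wpDl.
set a := dl / (n%:R + 1).
have a0 : 0 < a by rewrite divr_gt0.
set eta1 := a / (4%:R * (n%:R + 1)).
have eta10 : 0 < eta1 by rewrite divr_gt0 // mulr_gt0.
have teta : n%:R * eta1 <= a / 4%:R.
  have h : eta1 * (n%:R + 1) = a / 4%:R.
    rewrite /eta1; field; rewrite gt_eqF //.
  rewrite -h mulrC; apply: ler_wpM2l; [exact: ltW | by rewrite lerDl].
have [r r0 Hr] := step_eq C2f g0 epsc (posdef_margin pM) eta10.
exists r => //.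
have den : 0 < 2%:R * e + 2%:R * a by rewrite ltr_wpDl ?mulr_ge0 // mulr_gt0.
exists ((2%:R * e + a) / (2%:R * e + 2%:R * a)).
  apply/andP; split.
    apply: divr_ge0; last exact: ltW.
    by apply: addr_ge0; [apply: mulr_ge0 | exact: ltW].
  by rewrite ltr_pdivrMr // mul1r; lra.
move=> x xr; have hr := Hr _ xr.
set z := newton_map f eps x - xs.
set d := x - xs.
set rho := (H + e *: 1%:M) *m z - e *: d.
have Mz : (H + e *: 1%:M) *m z = rho + e *: d by rewrite subrK.
have qMz : q (H + e *: 1%:M) z = q H z + e * dot z z by rewrite qD q_scal.
have qMz2 : q (H + e *: 1%:M) z = e * dot z d + dot z rho.
  by rewrite /q Mz dotDr dotZr addrC.
have i1 := Hdl z.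
have i2 : dot z z <= (n%:R + 1) * `|z| ^+ 2.
  apply: le_trans (E_le z) _; apply: ler_wpM2r; rewrite ?sqr_ge0 // lerDl //.
have i3 := dot_2le z d.
have i4 : dot z rho <= n%:R * (`|z| * (eta1 * (2%:R * `|d| + `|z|))).
  apply: le_trans (ler_norm _) _; apply: le_trans (dot_le _ _) _.
  by apply: ler_wpM2l => //; apply: ler_wpM2l.
have i5 : 2%:R * (`|z| * `|d|) <= `|z| ^+ 2 + `|d| ^+ 2.
  have := sqr_ge0 (`|z| - `|d|); rewrite sqrrB; lra.
have i6 := E_ge z; have i7 := E_ge d.
have ia : a * dot z z <= dl * `|z| ^+ 2.
  have h : a * (n%:R + 1) = dl by rewrite /a divfK // gt_eqF.
  by apply: le_trans (ler_wpM2l (ltW a0) i2) _; rewrite mulrA h.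
have ie : e * (2%:R * dot z d) <= e * (dot z z + dot d d) by apply: ler_wpM2l.
have ne0 : 0 <= n%:R * eta1 by rewrite mulr_ge0 // ltW.
have ir : dot z rho <= a / 4%:R * (2%:R * dot z z + dot d d).
  apply: le_trans i4 _.
  have -> : n%:R * (`|z| * (eta1 * (2%:R * `|d| + `|z|))) =
    (n%:R * eta1) * (2%:R * (`|z| * `|d|) + `|z| ^+ 2) by ring.
  apply: le_trans (ler_wpM2l ne0 (lerD i5 (lexx (`|z| ^+ 2)))) _.
  apply: ler_pM => //; first by have := normr_ge0 z; have := normr_ge0 d; nra.
rewrite mulrAC ler_pdivlMr //.
lra.
Qed.

End Contr.



Section Stab.
Variables (R : realType) (n : nat).
Notation X := 'cV[R]_n.
Notation MM := 'M[R]_n.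

Lemma sq_lt (a : X) (r : R) : 0 < r -> `|a| ^+ 2 < r ^+ 2 -> `|a| < r.
Proof.
move=> r0 h; rewrite ltNge; apply/negP => ra.
have : r ^+ 2 <= `|a| ^+ 2 by rewrite !expr2; apply: ler_pM => //; exact: ltW.
by rewrite leNgt h.
Qed.

Lemma iter_bound (Phi : X -> X) xs r c : 0 < r -> 0 <= c < 1 ->
  (forall x, `|x - xs| < r -> dot (Phi x - xs) (Phi x - xs) <= c * dot (x - xs) (x - xs)) ->
  forall x0, dot (x0 - xs) (x0 - xs) < r ^+ 2 ->
  forall k, dot (iter k Phi x0 - xs) (iter k Phi x0 - xs) <= c ^+ k * dot (x0 - xs) (x0 - xs).
Proof.
move=> r0 /andP [c0 c1] H x0 h0; elim => [|k IH]; first by rewrite expr0 mul1r.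
have ck : c ^+ k <= 1 by apply: exprn_ile1 => //; exact: ltW.
have E0 := dot_self_ge0 (x0 - xs).
have lt : `|iter k Phi x0 - xs| < r.
  apply: sq_lt => //; apply: le_lt_trans (E_ge _) _; apply: le_lt_trans IH _.
  apply: le_lt_trans h0; rewrite -[leRHS]mul1r; exact: ler_wpM2r.
rewrite iterS; apply: le_trans (H _ lt) _.
by rewrite exprS -mulrA; apply: ler_wpM2l.
Qed.

Lemma contr_stable (Phi : X -> X) xs r c : 0 < r -> 0 <= c < 1 ->
  (forall x, `|x - xs| < r -> dot (Phi x - xs) (Phi x - xs) <= c * dot (x - xs) (x - xs)) ->
  loc_asym_stable Phi xs.
Proof.
move=> r0 cI H; have /andP [c0 c1] := cI.
have n1 : 0 < n%:R + 1 :> R by rewrite ltr_wpDl.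
have small : forall m : R, 0 < m -> forall x0 : X, `|x0 - xs| < m / (n%:R + 1) ->
    dot (x0 - xs) (x0 - xs) < m ^+ 2.
  move=> m m0 x0 hx; apply: le_lt_trans (E_le _) _.
  have hx0 := normr_ge0 (x0 - xs).
  have hm : `|x0 - xs| * (n%:R + 1) < m by rewrite -ltr_pdivlMr.
  have nn0 : 0 <= n%:R :> R by [].
  set t := `|x0 - xs| in hx0 hm *.
  have h1 : (t * (n%:R + 1)) ^+ 2 < m ^+ 2.
    by rewrite !expr2; apply: ltr_pM => //; rewrite mulr_ge0 // ltW.
  have h2 : 0 <= t ^+ 2 * (n%:R * n%:R + n%:R + 1).
    by rewrite mulr_ge0 ?sqr_ge0 // addr_ge0 // addr_ge0 // mulr_ge0.
  have h3 : n%:R * t ^+ 2 <= (t * (n%:R + 1)) ^+ 2.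
    rewrite -subr_ge0; have -> : (t * (n%:R + 1)) ^+ 2 - n%:R * t ^+ 2 =
      t ^+ 2 * (n%:R * n%:R + n%:R + 1) by ring.
    exact: h2.
  exact: le_lt_trans h3 h1.
split.
  move=> e e0; set m := Num.min r e.
  have m0 : 0 < m by rewrite lt_min r0 e0.
  exists (m / (n%:R + 1)); first by rewrite divr_gt0.
  move=> x0 hx k; have h0 := small _ m0 _ hx.
  have h0r : dot (x0 - xs) (x0 - xs) < r ^+ 2.
    apply: lt_le_trans h0 _; rewrite !expr2.
    have mr : m <= r by rewrite /m ge_min lexx.
    by apply: ler_pM => //; exact: ltW.
  have ib := iter_bound r0 cI H h0r k.
  have ck : c ^+ k <= 1 by apply: exprn_ile1 => //; exact: ltW.
  have : `|iter k Phi x0 - xs| < m.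
    apply: sq_lt => //; apply: le_lt_trans (E_ge _) _; apply: le_lt_trans ib _.
    apply: le_lt_trans h0; rewrite -[leRHS]mul1r; apply: ler_wpM2r => //.
    exact: dot_self_ge0.
  by move/lt_le_trans; apply; rewrite /m ge_min lexx orbT.
exists (r / (n%:R + 1)); first by rewrite divr_gt0.
move=> x0 hx; have h0 := small _ r0 _ hx.
set E0 := dot (x0 - xs) (x0 - xs).
have E00 : 0 <= E0 := dot_self_ge0 _.
apply/cvgrPdistC_lt => e e0.
have ce : `|c| < 1 by rewrite ger0_norm.
have e2 : 0 < e ^+ 2 / (E0 + 1) by rewrite divr_gt0 ?exprn_gt0 // ltr_wpDl.
have hc : \forall k \near \oo, `|c ^+ k| < e ^+ 2 / (E0 + 1).
  by apply: cvgr0_norm_lt => //; exact: cvg_expr.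
near=> k.
have hk : `|c ^+ k| < e ^+ 2 / (E0 + 1) by near: k; exact: hc.
have ib := iter_bound r0 cI H h0 k.
apply: sq_lt => //; apply: le_lt_trans (E_ge _) _; apply: le_lt_trans ib _.
rewrite ger0_norm ?exprn_ge0 // in hk.
have : c ^+ k * (E0 + 1) < e ^+ 2 by rewrite -ltr_pdivlMr // ltr_wpDl.
have : 0 <= c ^+ k by rewrite exprn_ge0.
rewrite -/E0; lra.
Unshelve. all: by end_near.
Qed.

End Stab.



Section Inst.
Variables (R : realType) (n : nat).
Notation X := 'cV[R]_n.
Notation MM := 'M[R]_n.

Lemma sym_of_posdef (H : MM) (e : R) : posdef (H + e *: 1%:M) -> H^T = H.
Proof.
move=> [s _]; move: s; rewrite linearD linearZ /= trmx1.
exact: addIr.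
Qed.

Lemma q_scale (B : MM) t a : q B (t *: a) = t ^+ 2 * q B a.
Proof. by rewrite /q -scalemxAr dotZl dotZr mulrA expr2. Qed.

Lemma q_add (B : MM) a t b : B^T = B ->
  q B (a + t *: b) = q B a + 2%:R * t * dot a (B *m b) + t ^+ 2 * q B b.
Proof.
move=> sB; have := q_sub a (- t) b sB; rewrite scaleNr opprK => ->.
by rewrite sqrrN; ring.
Qed.

Lemma inv_bound (H : MM) (z : X) : H \in unitmx ->
  `|z| <= (n%:R * `|invmx H| + 1) * `|H *m z|.
Proof.
move=> uH; have {1}-> : z = invmx H *m (H *m z) by rewrite mulKmx.
apply: le_trans (mul_le _ _) _; rewrite mulrA mulrDl mul1r lerDl //.
Qed.

Lemma inst_step (f : X -> R) (eps : X -> R) xs : C2 f -> grad f xs = 0 ->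
  (\forall x \near xs, eps x = eps xs) -> 0 < eps xs ->
  posdef (hess f xs + eps xs *: 1%:M) -> hess f xs \in unitmx ->
  exists2 r : R, 0 < r & exists2 ga : R, 0 < ga & forall x, `|x - xs| < r ->
    ga * `|newton_map f eps x - xs| ^+ 2 <=
    q (hess f xs) (x - xs) - q (hess f xs) (newton_map f eps x - xs).
Proof.
move=> C2f g0 epsc e0 pM uH.
set e := eps xs; set H := hess f xs; set M := H + e *: 1%:M.
have sH : H^T = H := sym_of_posdef pM.
have qM0 : forall w, 0 <= q M w.
  move=> w; have [->|w0] := eqVneq w 0; first by rewrite /q mulmx0 dot0r.
  by apply: ltW; rewrite -qE; case: pM => _; apply.
set ka := n%:R * `|invmx H| + 1.
have ka0 : 0 < ka by rewrite /ka ltr_wpDl // mulr_ge0.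
set A := n%:R * `|M|; set B := n%:R * `|H|.
have A0 : 0 <= A by rewrite mulr_ge0.
have B0 : 0 <= B by rewrite mulr_ge0.
set K := 2%:R * (A + e) / e.
have K0 : 0 <= K by rewrite /K divr_ge0 ?mulr_ge0 ?addr_ge0 // ltW.
set L := 2%:R * K + 1.
have L0 : 0 <= L by rewrite /L addr_ge0 // mulr_ge0.
set C := 2%:R * n%:R * A * B * L + n%:R * B * L ^+ 2.
have C0 : 0 <= C by rewrite /C addr_ge0 // !mulr_ge0 // sqr_ge0.
set eta1 := Num.min 1 (Num.min (e / 4%:R) (e / (2%:R * ka ^+ 2 * (C + 1)))).
have eta10 : 0 < eta1.
  rewrite /eta1 !lt_min ltr01 divr_gt0 //= divr_gt0 // !mulr_gt0 // ?exprn_gt0 //.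
  by rewrite ltr_wpDl.
have eta11 : eta1 <= 1 by rewrite /eta1 ge_min lexx.
have eta1e : eta1 <= e / 4%:R by rewrite /eta1 !ge_min lexx orbT.
have eta1C : eta1 * (C + 1) <= e / (2%:R * ka ^+ 2).
  have h : eta1 <= e / (2%:R * ka ^+ 2 * (C + 1)) by rewrite /eta1 !ge_min lexx !orbT.
  have C1 : 0 < C + 1 by rewrite ltr_wpDl.
  have hh : e / (2%:R * ka ^+ 2 * (C + 1)) * (C + 1) = e / (2%:R * ka ^+ 2).
    by field; rewrite !gt_eqF // ?exprn_gt0.
  by rewrite -hh; apply: ler_wpM2r => //; exact: ltW.
have [r r0 Hr] := step_eq C2f g0 epsc (posdef_margin pM) eta10.
exists r => //.
exists (e / (2%:R * ka ^+ 2) / e ^+ 2); first by rewrite !divr_gt0 ?exprn_gt0 // mulr_gt0 // exprn_gt0.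
move=> x xr; have hr := Hr _ xr.
set z := newton_map f eps x - xs in hr *.
set d := x - xs in hr *.
set rho := M *m z - e *: d.
have hrho : `|rho| <= eta1 * (2%:R * `|d| + `|z|) by [].
have ed : e *: d = M *m z - rho by rewrite /rho opprB addrC subrK.
have nMz : `|M *m z| <= A * `|z| by rewrite /A -mulrA; apply: mul_le.
have hd : `|d| <= K * `|z|.
  have h1 : e * `|d| <= A * `|z| + eta1 * (2%:R * `|d| + `|z|).
    rewrite -[e in e * _]ger0_norm; last exact: ltW.
    rewrite -normrZ ed.
    apply: le_trans (ler_normD _ _) _; rewrite normrN; exact: lerD.
  have h2 : eta1 * `|d| <= e / 4%:R * `|d| by apply: ler_wpM2r.
  have h3 : eta1 * `|z| <= e / 4%:R * `|z| by apply: ler_wpM2r.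
  have h4 : 0 <= e * `|z| by rewrite mulr_ge0 // ltW.
  have : `|d| <= 2%:R * (A + e) * `|z| / e.
    rewrite ler_pdivlMr //; lra.
  by rewrite /K mulrAC.
have hrho2 : `|rho| <= eta1 * L * `|z|.
  apply: le_trans hrho _; rewrite -mulrA; apply: ler_wpM2l; first exact: ltW.
  rewrite /L; lra.
set w := H *m z.
have Mzw : M *m z = w + e *: z by rewrite /M mulmxDl -scalemxAl mul1mx.
have ident : e ^+ 2 * q H d =
    q M w + e * dot w w + e ^+ 2 * q H z - 2%:R * dot (M *m z) (H *m rho) + q H rho.
  rewrite -q_scale ed -[rho in LHS]scale1r q_sub // Mzw q_add // /w -/w.
  rewrite /M qD q_scal /w; ring.
have nr0 := normr_ge0 rho; have nz0 := normr_ge0 z.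
have err1 : `|2%:R * dot (M *m z) (H *m rho)| <= 2%:R * n%:R * A * B * eta1 * L * `|z| ^+ 2.
  rewrite normrM ger0_norm // -!mulrA; apply: ler_wpM2l => //.
  apply: le_trans (dot_le _ _) _; apply: ler_wpM2l => //.
  have hH : `|H *m rho| <= B * (eta1 * L * `|z|).
    apply: le_trans (mul_le _ _) _; rewrite /B -mulrA; apply: ler_wpM2l => //.
    by apply: ler_wpM2l.
  apply: (le_trans (ler_pM (normr_ge0 _) (normr_ge0 _) nMz hH)).
  by rewrite /A /B le_eqVlt; apply/orP; left; apply/eqP; ring.
have err2 : `|q H rho| <= n%:R * B * (eta1 * L * `|z|) ^+ 2.
  apply: le_trans (q_bound _ _) _; rewrite -/B; apply: ler_wpM2l.
    by rewrite mulr_ge0.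
  by rewrite !expr2; apply: ler_pM.
have e12 : eta1 ^+ 2 <= eta1 by rewrite expr2 -[leRHS]mulr1; apply: ler_wpM2l => //; exact: ltW.
have err3 : n%:R * B * (eta1 * L * `|z|) ^+ 2 <= n%:R * B * L ^+ 2 * eta1 * `|z| ^+ 2.
  have -> : n%:R * B * (eta1 * L * `|z|) ^+ 2 = (n%:R * B * L ^+ 2 * `|z| ^+ 2) * eta1 ^+ 2 by ring.
  have -> : n%:R * B * L ^+ 2 * eta1 * `|z| ^+ 2 = (n%:R * B * L ^+ 2 * `|z| ^+ 2) * eta1 by ring.
  by apply: ler_wpM2l => //; rewrite !mulr_ge0 // sqr_ge0.
have hw : `|z| ^+ 2 <= ka ^+ 2 * dot w w.
  apply: (@le_trans _ _ ((ka * `|w|) ^+ 2)).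
    rewrite !expr2; apply: ler_pM => //; exact: inv_bound.
  by rewrite exprMn; apply: ler_wpM2l; rewrite ?sqr_ge0 // E_ge.
have hC : eta1 * C * `|z| ^+ 2 <= e / (2%:R * ka ^+ 2) * `|z| ^+ 2.
  apply: ler_wpM2r; first by rewrite sqr_ge0.
  apply: le_trans _ eta1C; lra.
have hka : e / (2%:R * ka ^+ 2) * `|z| ^+ 2 <= e / 2%:R * dot w w.
  have ka2 : 0 < ka ^+ 2 by rewrite exprn_gt0.
  have -> : e / (2%:R * ka ^+ 2) * `|z| ^+ 2 = e / 2%:R * (`|z| ^+ 2 / ka ^+ 2).
    by field; rewrite gt_eqF.
  apply: ler_wpM2l; first by rewrite divr_ge0 // ltW.
  by rewrite ler_pdivrMr // mulrC.
have qMw := qM0 w.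
have Cexp : eta1 * C * `|z| ^+ 2 = 2%:R * n%:R * A * B * eta1 * L * `|z| ^+ 2 + n%:R * B * L ^+ 2 * eta1 * `|z| ^+ 2.
  by rewrite /C; ring.
have hN1 := ler_norm (2%:R * dot (M *m z) (H *m rho)).
have hN2 : - q H rho <= `|q H rho| by rewrite -normrN ler_norm.
have main : e / (2%:R * ka ^+ 2) * `|z| ^+ 2 <= e ^+ 2 * (q H d - q H z).
  rewrite mulrBr ident.
  have ew : e * (e / 2%:R * dot w w) = e / 2%:R * (e * dot w w) by ring.
  lra.
by rewrite mulrAC ler_pdivrMr ?exprn_gt0 // [X in _ <= X]mulrC.
Qed.

End Inst.



Section Chet.
Variables (R : realType) (n : nat).
Notation X := 'cV[R]_n.
Notation MM := 'M[R]_n.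

Lemma chetaev (Phi : X -> X) xs (H : MM) (r ga : R) (v : X) : 0 < r -> 0 < ga ->
  q H v < 0 ->
  (forall x, `|x - xs| < r -> ga * `|Phi x - xs| ^+ 2 <= q H (x - xs) - q H (Phi x - xs)) ->
  unstable Phi xs.
Proof.
move=> r0 ga0 qv Hs stab.
have [dd dd0 Hd] := stab r r0.
have v1 : 0 < `|v| + 1 by rewrite ltr_wpDl.
set t := dd / (`|v| + 1).
have t0 : 0 < t by rewrite divr_gt0.
set x0 := xs + t *: v.
have hx0 : `|x0 - xs| < dd.
  rewrite /x0 (addrC xs) addrK normrZ gtr0_norm // /t mulrAC ltr_pdivrMr //.
  by rewrite mulrDr mulr1 ltrDl.
have Hk := Hd _ hx0.
set V := fun k => - q H (iter k Phi x0 - xs).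
set V0 := V 0%N.
have V00 : 0 < V0.
  rewrite /V0 /V /= /x0 (addrC xs) addrK q_scale oppr_gt0 pmulr_rlt0 //.
  by rewrite exprn_gt0.
set L := n%:R * (n%:R * `|H|) + 1.
have L0 : 0 < L by rewrite /L ltr_wpDl // !mulr_ge0.
have Vup : forall k, V k <= L * `|iter k Phi x0 - xs| ^+ 2.
  move=> k; rewrite /V; have h := q_bound H (iter k Phi x0 - xs).
  have h2 : - q H (iter k Phi x0 - xs) <= `|q H (iter k Phi x0 - xs)| by rewrite -normrN ler_norm.
  have h3 : 0 <= `|iter k Phi x0 - xs| ^+ 2 by rewrite sqr_ge0.
  rewrite /L mulrDl mul1r; lra.
set be := V0 / L.
have be0 : 0 < be by rewrite divr_gt0.
have step : forall k, V k.+1 >= V k + ga * `|iter k.+1 Phi x0 - xs| ^+ 2.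
  move=> k; have := Hs _ (Hk k); rewrite /V -iterS; lra.
have ind : forall k, V0 + k%:R * (ga * be) <= V k.
  elim => [|k IH]; first by rewrite mul0r addr0.
  have s := step k.
  have g1 : 0 <= ga * `|iter k.+1 Phi x0 - xs| ^+ 2 by rewrite mulr_ge0 ?sqr_ge0 // ltW.
  have kb : 0 <= k%:R * (ga * be) by rewrite mulr_ge0 // mulr_ge0 // ltW.
  have Vk1 : V0 <= V k.+1 by lra.
  have hb : be <= `|iter k.+1 Phi x0 - xs| ^+ 2.
    rewrite /be ler_pdivrMr // mulrC; exact: le_trans Vk1 (Vup _).
  have : ga * be <= ga * `|iter k.+1 Phi x0 - xs| ^+ 2 by rewrite ler_wpM2l // ltW.
  rewrite -natr1 mulrDl mul1r; lra.
have gb : 0 < ga * be by rewrite mulr_gt0.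
set y := L * r ^+ 2 / (ga * be).
have y0 : 0 <= y by apply: divr_ge0; [rewrite mulr_ge0 ?sqr_ge0 // ltW | exact: ltW].
have [kk hN] : exists kk : nat, y < kk%:R by exists (Num.Def.archi_bound y); exact: archi_boundP.
have h1 : L * r ^+ 2 < kk%:R * (ga * be) by move: hN; rewrite /y ltr_pdivrMr.
have h2 := ind kk; have h3 := Vup kk; have h4 := Hk kk.
have h5 : `|iter kk Phi x0 - xs| ^+ 2 < r ^+ 2.
  by rewrite !expr2; apply: ltr_pM.
have h6 : L * `|iter kk Phi x0 - xs| ^+ 2 < L * r ^+ 2 by rewrite ltr_pM2l.
lra.
Qed.

End Chet.

Unset Implicit Arguments. Set Strict Implicit. Set Printing Implicit Defensive.

Theorem theorem1 (R : realType) (n : nat) (f : 'cV[R]_n -> R)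
    (eps : 'cV[R]_n -> R) (xs : 'cV[R]_n) :
  C2 f ->
  (forall x, 0 <= eps x) ->
  grad f xs = 0 ->
  hess f xs \in unitmx ->
  (\forall x \near xs, differentiable (hess f) x) ->
  (\forall x \near xs, eps x = eps xs) ->
  posdef (hess f xs + eps xs *: 1%:M) ->
  (local_min f xs -> loc_asym_stable (newton_map f eps) xs) /\
  (~ local_min f xs -> unstable (newton_map f eps) xs).
Proof.
move=> C2f eps0 g0 uH _ epsc pM.
have e0 := eps0 xs.
have sH := sym_of_posdef pM.
split.
  move=> lm; have psd := localmin_psd C2f g0 lm.
  have mH := margin sH psd uH.
  have [r r0 [c cI Hc]] := contraction C2f g0 epsc e0 pM mH.
  exact: contr_stable r0 cI Hc.
move=> nlm.
have [v qv] : exists v, q (hess f xs) v < 0.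
  apply: contrapT => hne; apply: nlm; apply: margin_localmin => //.
  apply: margin => // u; rewrite leNgt; apply/negP => hu; by apply: hne; exists u.
have v0 : v != 0 by apply: contraTneq qv => ->; rewrite /q mulmx0 dot0r ltxx.
have epos : 0 < eps xs.
  have := (pM.2 v v0); rewrite qE qD q_scal.
  move=> h; rewrite lt_def e0 andbT; apply/eqP => e00.
  rewrite e00 mul0r addr0 in h; by have := lt_trans h qv; rewrite ltxx.
have [r r0 [ga ga0 Hs]] := inst_step C2f g0 epsc epos pM uH.
exact: chetaev r0 ga0 qv Hs.
Qed.
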